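(* Let $\mathbb{X}$ be a finite-dimensional real Banach space. If a non-zero linear operator $T:\mathbb{X}\to\mathbb{X}$ preserves Birkhoff–James orthogonality at each $x\in\operatorname{Ext}B_{\mathbb{X}}$, then $T$ is bijective.
   Context: $u\perp_B v$ means $\|u+\lambda v\|\ge\|u\|$ for all real $\lambda$; $T$ preserves Birkhoff–James orthogonality at $x$ if $x\perp_B v\Rightarrow Tx\perp_B Tv$ for all $v$. $\operatorname{Ext}B_{\mathbb{X}}$ is the set of extreme points of the closed unit ball. *)

(* Defs.v *)
From mathcomp Require Import all_boot all_order all_algebra.
From mathcomp Require Import reals.
Set Implicit Arguments. Unset Strict Implicit. Unset Printing Implicit Defensive.
Import Order.TTheory GRing.Theory Num.Theory.
Local Open Scope ring_scope.

(* A finite-dimensional real normed space is modelled (up to isometric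
   isomorphism) as 'rV[R]_n equipped with an arbitrary norm N. *)
Definition is_norm (R : realType) (n : nat) (N : 'rV[R]_n -> R) : Prop :=
  [/\ forall x y, N (x + y) <= N x + N y,
      forall (a : R) x, N (a *: x) = `|a| * N x
    & forall x, N x = 0 -> x = 0].

Definition bj_orth (R : realType) (n : nat) (N : 'rV[R]_n -> R) (u v : 'rV[R]_n) : Prop :=
  forall l : R, N u <= N (u + l *: v).

Definition preserves_bj_at (R : realType) (n : nat) (N : 'rV[R]_n -> R)
  (T : 'rV[R]_n -> 'rV[R]_n) (x : 'rV[R]_n) : Prop :=
  forall v, bj_orth N x v -> bj_orth N (T x) (T v).

Definition ext_ball (R : realType) (n : nat) (N : 'rV[R]_n -> R) (x : 'rV[R]_n) : Prop :=
  N x <= 1 /\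
  forall (y z : 'rV[R]_n) (t : R), N y <= 1 -> N z <= 1 -> 0 < t -> t < 1 ->
    x = t *: y + (1 - t) *: z -> y = z.

(* Main.v *)
Require Import Defs.
From mathcomp Require Import all_boot all_order all_algebra.
From mathcomp Require Import ring lra.
From mathcomp Require Import boolp classical_sets reals topology normedtype derive.
Import Order.TTheory GRing.Theory Num.Def Num.Theory.
Import numFieldNormedType.Exports.
Local Open Scope classical_set_scope.
Local Open Scope ring_scope.
Set Implicit Arguments. Unset Strict Implicit. Unset Printing Implicit Defensive.

Lemma inj_bij (R : realType) (n : nat) (T : {linear 'rV[R]_n -> 'rV[R]_n}) :
  (forall z, T z = 0 -> z = 0) -> bijective T.
Proof.
move=> Hinj.
set A := lin1_mx T.
have HA : forall u, u *m A = T u by move=> u; rewrite mul_rV_lin1.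
have K0 : kermx A = 0.
  apply/row_matrixP => i; rewrite row0.
  apply: Hinj; rewrite -HA; apply/sub_kermxP.
  exact: row_sub.
have uA : A \in unitmx by rewrite -row_free_unit -kermx_eq0 K0.
exists (fun x => x *m invmx A) => x /=.
  by rewrite -(HA x) mulmxK.
by rewrite -HA mulmxKV.
Qed.

Lemma lip_cont (R : realType) (n : nat) (f : 'rV[R]_n -> R) C :
  (forall x y, `|f x - f y| <= C * `|x - y|) -> continuous f.
Proof.
move=> H x; apply/(@cvgrPdist_lt _ _ _ _ (nbhs_filter x)) => e e0.
have C1 : 0 < `|C| + 1 by rewrite ltr_pwDr // normr_ge0.
near=> y.
apply: (le_lt_trans (H x y)).
apply: (le_lt_trans (y := (`|C| + 1) * `|x - y|)).
  by apply: ler_wpM2r; [exact: normr_ge0| rewrite (le_trans (ler_norm _))// lerDl].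
rewrite -ltr_pdivlMl //.
near: y.
have hp : 0 < e / (`|C| + 1) by rewrite mulr_gt0 // invr_gt0.
have := (@cvgr_dist_lt _ _ _ _ (nbhs_filter x) id x cvg_id _ hp).
by rewrite mulrC.
Unshelve. all: by end_near. Qed.

Section Dot.
Variables (R : realType) (n : nat).
Implicit Types a x y v : 'rV[R]_n.

Definition dot a x : R := \sum_i a 0 i * x 0 i.

Lemma dotC a x : dot a x = dot x a.
Proof. by apply: eq_bigr => i _; rewrite mulrC. Qed.

Lemma dotDr a x y : dot a (x + y) = dot a x + dot a y.
Proof. by rewrite /dot -big_split; apply: eq_bigr => i _; rewrite mxE mulrDr. Qed.

Lemma dotZr a k x : dot a (k *: x) = k * dot a x.
Proof. by rewrite /dot mulr_sumr; apply: eq_bigr => i _; rewrite mxE mulrCA. Qed.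

Lemma dotDl a x y : dot (x + y) a = dot x a + dot y a.
Proof. by rewrite !(dotC _ a) dotDr. Qed.

Lemma dotZl a k x : dot (k *: x) a = k * dot x a.
Proof. by rewrite !(dotC _ a) dotZr. Qed.

Lemma dotNr a x : dot a (- x) = - dot a x.
Proof. by rewrite -scaleN1r dotZr mulN1r. Qed.

Lemma dotBr a x y : dot a (x - y) = dot a x - dot a y.
Proof. by rewrite dotDr dotNr. Qed.

Lemma dot0r a : dot a 0 = 0.
Proof. by rewrite -(scale0r 0) dotZr mul0r. Qed.

Lemma dot_ge0 x : 0 <= dot x x.
Proof. by apply: sumr_ge0 => i _; rewrite -expr2 sqr_ge0. Qed.

Lemma dot_eq0 x : dot x x = 0 -> x = 0.
Proof.
move=> /eqP; rewrite psumr_eq0; last by move=> i _; rewrite -expr2 sqr_ge0.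
move=> /allP H; apply/rowP => i; rewrite mxE.
by have /(_ (mem_index_enum i))/implyP/(_ isT) := H i; rewrite mulf_eq0 orbb => /eqP.
Qed.

Lemma dot_mx a x (A : 'M[R]_n) : dot a (x *m A) = dot (a *m A^T) x.
Proof.
rewrite /dot.
transitivity (\sum_i \sum_j a 0 i * (x 0 j * A j i)).
  by apply: eq_bigr => i _; rewrite mxE big_distrr.
rewrite exchange_big; apply: eq_bigr => j _; rewrite mxE big_distrl.
by apply: eq_bigr => i _; rewrite !mxE mulrA mulrAC.
Qed.

Lemma sq_expand x d : dot (x + d) (x + d) = dot x x + 2 * dot x d + dot d d.
Proof. by rewrite dotDl !dotDr (dotC d x); lra. Qed.

Lemma coord_le x i : `|x 0 i| <= `|x|.
Proof.
have /mapP[j Hj ->] : `|x 0 i| \in [seq `|x k.1 k.2| | k : 'I_1 * 'I_n].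
  by apply/mapP; exists (0, i) => //=; rewrite mem_enum.
by rewrite [leRHS]/normr /= mx_normrE; apply/bigmax_geP; right => /=; exists j.
Qed.

Lemma dot_bound a x : `|dot a x| <= (\sum_i `|a 0 i|) * `|x|.
Proof.
apply: le_trans (ler_norm_sum _ _ _) _; rewrite mulr_suml.
apply: ler_sum => i _; rewrite normrM; apply: ler_wpM2l => //; exact: coord_le.
Qed.

Lemma dot_sq_bound x : dot x x <= n%:R * `|x| ^+ 2.
Proof.
rewrite (_ : n%:R * `|x| ^+ 2 = \sum_(i < n) `|x| ^+ 2); last by rewrite sumr_const card_ord mulr_natl.
rewrite /dot; apply: ler_sum => i _.
rewrite -expr2 -real_normK ?num_real // !expr2.
by apply: ler_pM => //; exact: coord_le.
Qed.

Lemma dot_cont a : continuous (dot a).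
Proof.
move=> x; apply: (continuous_big (op := +%R) (x0 := 0)) => //.
  exact: add_continuous.
move=> i _ y; apply: continuousM; first exact: cst_continuous.
exact: coord_continuous.
Qed.

Lemma dotsq_cont : continuous (fun x => dot x x).
Proof.
move=> x; apply: (@continuous_big R 'I_n +%R 0 xpredT add_continuous _ (index_enum 'I_n) (fun i (x : 'rV[R]_n) => x 0 i * x 0 i)) => //.
move=> i _ y; apply: continuousM; exact: coord_continuous.
Qed.
End Dot.

Section Norm.
Variables (R : realType) (n : nat) (N : 'rV[R]_n -> R).
Hypothesis hN : is_norm N.

Lemma N0 : N 0 = 0.
Proof. by case: hN => _ hZ _; rewrite -(scale0r 0) hZ normr0 mul0r. Qed.

Lemma NN x : N (- x) = N x.
Proof. by case: hN => _ hZ _; rewrite -scaleN1r hZ normrN normr1 mul1r. Qed.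

Lemma Nge0 x : 0 <= N x.
Proof.
case: hN => hD _ _.
have := hD x (- x); rewrite subrr N0 NN => h.
by rewrite -(pmulr_rge0 _ (ltr0Sn R 1)) mulr2n mulrDl mul1r.
Qed.

Lemma Ndist x y : `|N x - N y| <= N (x - y).
Proof.
case: hN => hD _ _.
have h1 := hD (y - x) x; rewrite subrK -[y - x]opprB NN in h1.
have h2 := hD (x - y) y; rewrite subrK in h2.
rewrite ler_norml; apply/andP; split; lra.
Qed.

Lemma Nsum (I : Type) (r : seq I) (F : I -> 'rV[R]_n) :
  N (\sum_(i <- r) F i) <= \sum_(i <- r) N (F i).
Proof.
case: hN => hD _ _.
elim/big_rec2: _ => [|i y2 y1 _ h]; first by rewrite N0.
have h2 := hD (F i) y1. have h3 : N (F i) + N y1 <= N (F i) + y2 by rewrite lerD2l. lra.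
Qed.

Definition Cn := \sum_(j < n) N (delta_mx 0 j).

Lemma Nup x : N x <= Cn * `|x|.
Proof.
case: hN => _ hZ _.
rewrite {1}(row_sum_delta x); apply: le_trans (Nsum _ _) _.
rewrite /Cn mulr_suml; apply: ler_sum => j _.
rewrite hZ mulrC; apply: ler_wpM2l; first exact: Nge0.
have /mapP[k Hk ->] : `|x 0 j| \in [seq `|x k.1 k.2| | k : 'I_1 * 'I_n].
  by apply/mapP; exists (0, j) => //=; rewrite mem_enum.
by rewrite [leRHS]/normr /= mx_normrE; apply/bigmax_geP; right => /=; exists k.
Qed.

Lemma Ncont : continuous N.
Proof. by apply: (@lip_cont _ _ _ Cn) => x y; apply: le_trans (Ndist x y) (Nup _). Qed.

Lemma Nlow : exists2 m, 0 < m & forall x, m * `|x| <= N x.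
Proof.
have hZ : forall (a : R) x, N (a *: x) = `|a| * N x by case: hN.
have hdef : forall x, N x = 0 -> x = 0 by case: hN.
pose S := [set x : 'rV[R]_n | `|x| = 1].
have Hu : forall x : 'rV[R]_n, x != 0 -> S (`|x|^-1 *: x).
  move=> x x0; by rewrite /S /= normrZ normrV ?unitfE ?normr_eq0 // normr_id mulVf // normr_eq0.
case: (pselect (S !=set0)) => [S0|S0]; last first.
  exists 1 => // x; case: (eqVneq x 0) => [->|x0]; first by rewrite normr0 mulr0 N0.
  by exfalso; apply: S0; exists (`|x|^-1 *: x); exact: Hu.
have cS : compact S.
  apply: bounded_closed_compact.
    change (\forall M \near +oo, forall x, S x -> `|x| <= M); near=> M => x Sx; rewrite Sx.
    by near: M; apply: nbhs_pinfty_ge; rewrite num_real.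
  rewrite (_ : S = normr @^-1` [set 1]) //.
  by apply: (continuous_closedP _).1; [exact: norm_continuous | exact: closed_eq].
have [c Sc cmin] := EVT_min_rV S0 cS (continuous_subspaceT Ncont).
rewrite inE /S /= in Sc.
have Nc0 : 0 < N c.
  rewrite lt_def Nge0 andbT; apply/eqP => /hdef c0.
  by move: Sc; rewrite c0 normr0 => /eqP; rewrite eq_sym oner_eq0.
exists (N c) => // x; case: (eqVneq x 0) => [->|x0]; first by rewrite normr0 mulr0 N0.
have := cmin _ (mem_set (Hu x x0)); rewrite hZ normrV ?unitfE ?normr_eq0 // normr_id.
by rewrite ler_pdivlMl ?normr_gt0 // mulrC.
Unshelve. all: by end_near. Qed.

Lemma Bbound : exists2 r, 0 < r & forall v, N v <= 1 -> `|v| <= r.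
Proof.
have [m m0 Hm] := Nlow.
exists m^-1; first by rewrite invr_gt0.
move=> v Nv; rewrite -[m^-1]mulr1 ler_pdivlMl //.
exact: le_trans (Hm v) Nv.
Qed.

Lemma Bcompact : compact [set v | N v <= 1].
Proof.
have [r r0 Hr] := Bbound.
apply: bounded_closed_compact.
  change (\forall M \near +oo, forall x, N x <= 1 -> `|x| <= M); near=> M => x Sx.
  apply: le_trans (Hr _ Sx) _.
  by near: M; apply: nbhs_pinfty_ge; rewrite num_real.
rewrite (_ : [set v | N v <= 1] = N @^-1` [set t | t <= 1]) //.
by apply: (continuous_closedP _).1; [exact: Ncont | exact: closed_le].
Unshelve. all: by end_near. Qed.

End Norm.
Theorem mainTheorem11 (R : realType) (n : nat) (N : 'rV[R]_n -> R)
  (T : {linear 'rV[R]_n -> 'rV[R]_n}) :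
  is_norm N ->
  (exists x, T x != 0) ->
  (forall x, ext_ball N x -> preserves_bj_at N T x) ->
  bijective T.
Proof.
move=> hN [y Ty0] Hpres.
apply: inj_bij => z Tz; apply/eqP; apply/negPn/negP => z0.
have hZ : forall (a : R) x, N (a *: x) = `|a| * N x by case: hN.
have hdef : forall x, N x = 0 -> x = 0 by case: hN.
have [r r0 Hr] := Bbound hN.
have nge0 := Nge0 hN.
have n0 := N0 hN.
set A := lin1_mx T.
have HA : forall u, T u = u *m A by move=> u; rewrite mul_rV_lin1.
set c := T y *m A^T.
have hc : forall x, dot c x = dot (T y) (T x) by move=> x; rewrite (HA x) dot_mx.
set Sz := \sum_i `|z 0 i|.
have Sz0 : 0 <= Sz by apply: sumr_ge0.
set C := Sz * r + n%:R * r ^+ 2 + 1.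
have Sr0 : 0 <= Sz * r by rewrite mulr_ge0 // ltW.
have nr0 : 0 <= n%:R * r ^+ 2 by rewrite mulr_ge0 // exprn_ge0 // ltW.
have C0 : 0 < C by rewrite /C; lra.
have Hg : forall x, N x <= 1 -> `|dot z x| <= C.
  move=> x Nx; apply: le_trans (dot_bound _ _) _.
  apply: (@le_trans _ _ (Sz * r)); first by apply: ler_wpM2l => //; exact: Hr.
  rewrite /C; lra.
have Hq : forall x, N x <= 1 -> dot x x <= C.
  move=> x Nx; apply: le_trans (dot_sq_bound _) _.
  apply: (@le_trans _ _ (n%:R * r ^+ 2)).
    apply: ler_wpM2l => //; rewrite !expr2; apply: ler_pM => //; exact: Hr.
  rewrite /C; lra.
have y0 : y != 0 by apply: contraNneq Ty0 => ->; rewrite linear0.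
have Ny0 : 0 < N y.
  rewrite lt_def nge0 // andbT; apply/eqP => /hdef; exact/eqP.
set p := (N y)^-1 *: y.
have Np : N p <= 1 by rewrite /p hZ normrV ?unitfE ?gt_eqF // gtr0_norm // mulVf ?gt_eqF.
set eta := dot c p.
have eta0 : 0 < eta.
  rewrite /eta hc /p linearZ dotZr mulr_gt0 ?invr_gt0 //.
  rewrite lt_def dot_ge0 andbT; apply/eqP => /dot_eq0; exact/eqP.
set gam := dot z z.
have gam0 : 0 < gam by rewrite lt_def dot_ge0 andbT; apply/eqP => /dot_eq0; exact/eqP.
set eps := eta / (4 * C).
have eps0 : 0 < eps by rewrite divr_gt0 // mulr_gt0.
have epsC : eps * C * 4 = eta by rewrite /eps; field; rewrite gt_eqF.
set del := eps * gam / (gam + 4 * C).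
have gC : 0 < gam + 4 * C by lra.
have del0 : 0 < del by rewrite divr_gt0 // mulr_gt0.
have delE : del * (gam + 4 * C) = eps * gam.
  by rewrite /del mulfVK // gt_eqF.
have dele : del <= eps by nra.
set a := c + eps *: z.
pose Phi v := dot a v + del * dot v v.
have Phic : continuous Phi.
  move=> v; apply: continuousD; first exact: dot_cont.
  by apply: continuousM; [exact: cst_continuous | exact: dotsq_cont].
have B0 : [set v | N v <= 1] !=set0 by exists 0; rewrite /= n0.
have [x Bx xmax] := EVT_max_rV B0 (Bcompact hN) (continuous_subspaceT Phic).
rewrite inE /= in Bx.
have Hmax : forall v, N v <= 1 -> Phi v <= Phi x by move=> v Nv; apply: xmax; rewrite inE.
set w := a + (2 * del) *: x.
pose L v := dot w v.
have Lexp : forall v, L v = dot c v + eps * dot z v + 2 * del * dot x v.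
  by move=> v; rewrite /L /w /a !dotDl !dotZl.
have HL : forall v, N v <= 1 -> L v <= L x.
  move=> v Nv; have := Hmax v Nv.
  have ev : v = x + (v - x) by rewrite addrC subrK.
  move: (v - x) ev => d ->.
  rewrite /Phi !Lexp sq_expand /a !dotDl !dotZl !dotDr.
  have := dot_ge0 d; nra.
have Lz : 0 < L z.
  rewrite Lexp hc Tz dot0r add0r -/gam.
  have := Hg x Bx; rewrite dotC ler_norml => /andP[h1 h2]; nra.
have Lx0 : 0 < L x.
  have Nz0 : 0 < N z by rewrite lt_def nge0 // andbT; apply/eqP => /hdef; exact/eqP.
  have := HL ((N z)^-1 *: z).
  rewrite hZ normrV ?unitfE ?gt_eqF // gtr0_norm // mulVf ?gt_eqF // lexx /L dotZr => /(_ isT).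
  by apply: lt_le_trans; rewrite mulr_gt0 // invr_gt0.
have hx : 0 < dot c x.
  have := Hmax p Np; rewrite /Phi /a !dotDl !(dotZl _ eps) -/eta.
  have := Hg x Bx; have := Hg p Np; rewrite !ler_norml => /andP[h1 h2] /andP[h3 h4].
  have := Hq x Bx; have := dot_ge0 p => h5 h6.
  have k1 : 0 <= eps * (C + dot z p) by apply: mulr_ge0; [exact: ltW | lra].
  have k2 : 0 <= eps * (C - dot z x) by apply: mulr_ge0; [exact: ltW | lra].
  have k3 : 0 <= del * dot p p by rewrite mulr_ge0 // ltW.
  have k4 : 0 <= del * (C - dot x x) by apply: mulr_ge0; [exact: ltW | lra].
  have k5 : 0 <= (eps - del) * C by apply: mulr_ge0; [lra | exact: ltW].
  move=> hh; nra.
have Tx0 : T x != 0.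
  by apply/eqP => Tx; move: hx; rewrite hc Tx dot0r ltxx.
have ext : ext_ball N x.
  split => // y1 y2 t N1 N2 t0 t1 hxe.
  have P1 := Hmax y1 N1; have P2 := Hmax y2 N2.
  apply/eqP; rewrite -subr_eq0; apply/eqP; apply: dot_eq0.
  apply/eqP; rewrite eq_le dot_ge0 andbT.
  have ev : y1 = y2 + (y1 - y2) by rewrite addrC subrK.
  move: (y1 - y2) ev => d ev.
  rewrite ev in P1 hxe; rewrite hxe in P1 P2.
  rewrite (_ : t *: (y2 + d) + (1 - t) *: y2 = y2 + t *: d) in P1 P2; last first.
    by apply/rowP => i; rewrite !mxE; ring.
  move: P1 P2; rewrite /Phi !sq_expand !dotDr !dotZr !(dotZl _ t) => P1 P2.
  have hd := dot_ge0 d.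
  have h : del * (t * (1 - t)) * dot d d <= 0 by nra.
  have hp : 0 < del * (t * (1 - t)) by rewrite mulr_gt0 // mulr_gt0 // subr_gt0.
  by move: h; rewrite pmulr_rle0.
have orth : forall v, L v = 0 -> bj_orth N x v.
  move=> v Lv l.
  have Lu : L (x + l *: v) = L x by rewrite /L dotDr dotZr -/(L v) Lv mulr0 addr0.
  have [u0|u0] := eqVneq (N (x + l *: v)) 0.
    by move: Lx0; rewrite -Lu (hdef _ u0) /L dot0r ltxx.
  have Nu0 : 0 < N (x + l *: v) by rewrite lt_def u0 nge0.
  have := HL ((N (x + l *: v))^-1 *: (x + l *: v)).
  rewrite hZ normrV ?unitfE // gtr0_norm // mulVf // lexx => /(_ isT).
  rewrite /L dotZr -/(L _) Lu ger_pMl // invf_le1 // => h.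
  exact: le_trans Bx h.
set v0 := x - (L x / L z) *: z.
have Lv0 : L v0 = 0.
  by rewrite /v0 /L dotBr dotZr -/(L x) -/(L z) mulfVK ?gt_eqF // subrr.
have := Hpres x ext v0 (orth v0 Lv0) (-1).
have Tkz : T ((L x / L z) *: z) = 0 by rewrite HA -scalemxAl -HA Tz scaler0.
rewrite /v0 linearB /= Tkz subr0 scaleN1r subrr n0 => h.
move/eqP: Tx0; apply; apply: hdef; apply/eqP; by rewrite eq_le h nge0.
Qed.
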